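(* Let $A$ be a finite set and let $f\in A^A$ with $f\notin T$ be of type I, II or III. Then $M_f=\langle f\rangle\cup C$ is a minimal u-closed monoid; in particular $M_f=\overline{M_f}$. Moreover, $\mathrm{End}\,\mathrm{gQuord}\,M_f=\mathrm{End}\,\mathrm{Quord}\,M_f$.
   Context: $C$ is the set of all constant unary maps on $A$, $T=\{\mathrm{id}_A\}\cup C$, and $\langle f\rangle$ is the submonoid of $A^A$ generated by $f$. Types: (I) $f^2=f$; (II) $f^2$ is a constant $v$ and $|\{x\in A\mid fx=v\}|\ge3$; (III) $f$ is a permutation with $f^p=\mathrm{id}_A$ for some prime $p$ and $f$ has at least two cycles of length $p$. A translation of an $n$-ary operation $g$ is $x\mapsto g(a_1,\dots,a_{i-1},x,a_{i+1},\dots,a_n)$ with fixed $a_j$; $\mathrm{trl}(g)$ is the set of translations ($\{g\}$ for unary $g$); $N^*:=\{g\mid\mathrm{trl}(g)\subseteq N\}$. The u-closure $\overline M$ is the intersection of all monoids $N$ with $M\subseteq N\le A^A$ such that $N^*$ is a clone; $M$ is u-closed if $\overline M=M$. A minimal u-closed monoid is a u-closed monoid $M\le A^A$ with $T\subsetneq M$ such that every u-closed monoid properly contained in $M$ equals $T$. A relation $\rho\subseteq A^m$ is a generalized quasiorder if it is reflexive and for every $m\times m$-matrix over $A$ whose rows and columns all lie in $\rho$ the diagonal lies in $\rho$ (binary ones are exactly the quasiorders, i.e., reflexive transitive binary relations). $\mathrm{gQuord}\,M$ (resp. $\mathrm{Quord}\,M$) is the set of generalized quasiorders (resp. quasiorders)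 on $A$ preserved by all maps of $M$, and $\mathrm{End}\,Q$ is the set of all unary maps preserving every relation in $Q$. *)

(* Defs.v *)
From mathcomp Require Import all_boot.
Set Implicit Arguments. Unset Strict Implicit. Unset Printing Implicit Defensive.

Section UClosure.
Variable A : finType.

Definition mapset := (A -> A) -> Prop.

(* an operation of arity n.+1 (operations of positive arity) *)
Definition op (n : nat) := ('I_n.+1 -> A) -> A.

Definition opset := forall n : nat, op n -> Prop.

Definition clone (F : opset) : Prop :=
  (forall n (i : 'I_n.+1), F n (fun x => x i)) /\
  (forall m n (g : op m) (hs : 'I_m.+1 -> op n),
      F m g -> (forall j, F n (hs j)) -> F n (fun x => g (fun j => hs j x))).

Definition translation n (g : op n) (i : 'I_n.+1) (a : 'I_n.+1 -> A) : A -> A :=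
  fun x => g (fun j => if j == i then x else a j).

Definition Nstar (N : mapset) : opset :=
  fun n g => forall i a, N (translation g i a).

Definition submonoid (N : mapset) : Prop :=
  N (fun x => x) /\ (forall g h, N g -> N h -> N (fun x => g (h x))).

Definition subsetM (M N : mapset) : Prop := forall g, M g -> N g.
Definition eqM (M N : mapset) : Prop := forall g, M g <-> N g.

Definition uclosure (M : mapset) : mapset :=
  fun g => forall N, submonoid N -> subsetM M N -> clone (Nstar N) -> N g.

Definition u_closed (M : mapset) : Prop := eqM (uclosure M) M.

Definition Cset : mapset := fun g => exists c : A, g = (fun _ => c).
Definition Tset : mapset := fun g => g = (fun x => x) \/ Cset g.

Definition proper_sub (N M : mapset) : Prop :=
  subsetM N M /\ exists g, M g /\ ~ N g.

Definition minimal_uclosed (M : mapset) : Prop :=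
  [/\ submonoid M, u_closed M, proper_sub Tset M &
   forall N, submonoid N -> u_closed N -> proper_sub N M -> eqM N Tset].

Definition Mf (f : A -> A) : mapset :=
  fun g => (exists k : nat, g = iter k f) \/ Cset g.

Definition typeI (f : A -> A) : Prop := forall x, f (f x) = f x.
Definition typeII (f : A -> A) : Prop :=
  exists v : A, (forall x, f (f x) = v) /\ 3 <= #|[set x | f x == v]|.
Definition typeIII (f : A -> A) : Prop :=
  bijective f /\
  exists p, [/\ prime p, (forall x, iter p f x = x) &
    exists x y, [/\ order f x = p, order f y = p & ~~ fconnect f x y]].

Definition preserves m (h : A -> A) (rho : ('I_m -> A) -> Prop) : Prop :=
  forall r, rho r -> rho (fun i => h (r i)).

Definition gen_quasiorder m (rho : ('I_m -> A) -> Prop) : Prop :=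
  (forall a : A, rho (fun _ => a)) /\
  (forall X : 'I_m -> 'I_m -> A,
     (forall i, rho (X i)) -> (forall j, rho (fun i => X i j)) ->
     rho (fun i => X i i)).

Definition gQuord (M : mapset) m (rho : ('I_m -> A) -> Prop) : Prop :=
  gen_quasiorder rho /\ forall g, M g -> preserves g rho.

Definition quasiorder (r : A -> A -> Prop) : Prop :=
  (forall x, r x x) /\ (forall x y z, r x y -> r y z -> r x z).

Definition preserves2 (h : A -> A) (r : A -> A -> Prop) : Prop :=
  forall x y, r x y -> r (h x) (h y).

Definition Quord (M : mapset) (r : A -> A -> Prop) : Prop :=
  quasiorder r /\ forall g, M g -> preserves2 g r.

Definition End_gQuord (M : mapset) : mapset :=
  fun h => forall m rho, @gQuord M m rho -> preserves h rho.
Definition End_Quord (M : mapset) : mapset :=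
  fun h => forall r, Quord M r -> preserves2 h r.

End UClosure.

(* Main.v *)
Require Import Defs.
From mathcomp Require Import all_boot.
From Stdlib Require Import FunctionalExtensionality Classical.
Set Implicit Arguments. Unset Strict Implicit. Unset Printing Implicit Defensive.

Section Gen.
Variable A : finType.
Variable f : A -> A.

Lemma Mf_pres (R : A -> A -> Prop) :
  (forall x, R x x) -> (forall x y, R x y -> R (f x) (f y)) ->
  forall g, Mf f g -> preserves2 g R.
Proof.
move=> Rr Rf g [[k ->]|[c ->]] x y Rxy //.
by elim: k => //= k IH; apply: Rf.
Qed.

Lemma quord_of (R : A -> A -> Prop) :
  (forall x, R x x) -> (forall x y z, R x y -> R y z -> R x z) ->
  (forall x y, R x y -> R (f x) (f y)) -> Quord (Mf f) R.
Proof. by move=> Rr Rt Rf; split; [split|apply: Mf_pres]. Qed.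

Definition Rweak x y u v := u = v \/ ((exists i, u = iter i f x) /\ (exists j, v = iter j f y)).
Definition Rpair (x y u v : A) := u = v \/ (u = x /\ v = y).
Definition R2 x y u v := u = v \/ (u = x /\ v = y) \/ (u = f x /\ v = f y).
Definition Rorb x y u v := u = v \/ exists i, u = iter i f x /\ v = iter i f y.

Lemma Rweak_q x y : Quord (Mf f) (Rweak x y).
Proof.
apply: quord_of; first by move=> ?; left.
- rewrite /Rweak => a b c [->|[H1 H1']] //; case=> [<-|[_ H2]]; first by right.
  by right.
- move=> a b [->|[[i ->] [j ->]]]; first by left.
  by right; split; [exists i.+1|exists j.+1].
Qed.

Lemma Rpair_q x y : f x = f y -> Quord (Mf f) (Rpair x y).
Proof.
move=> fxy; apply: quord_of; first by move=> ?; left.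
- rewrite /Rpair => a b c; intuition (subst; first [by left|by right|congruence]).
- rewrite /Rpair => a b; intuition (subst; first [by left|by right|congruence]).
Qed.

Lemma R2_q x y : f x <> f y -> y <> f x -> x <> f y ->
  R2 x y (f (f x)) (f (f y)) -> Quord (Mf f) (R2 x y).
Proof.
move=> h1 h2 h3 h4; apply: quord_of; first by move=> ?; left.
- rewrite /R2 => a b c; intuition (subst; first [by left|by right; left|by right; right|congruence]).
- move=> a b; rewrite /R2; intuition (subst; first [by left|by right; right|exact: h4]).
Qed.

Lemma Rorb_q x y : (forall i j, iter i f y <> iter j f x) -> Quord (Mf f) (Rorb x y).
Proof.
move=> hd; apply: quord_of; first by move=> ?; left.
- rewrite /Rorb => a b c [->|[i [-> E]]]; first by [].
  case=> [<-|[j [E' ->]]]; first by right; exists i.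
  by case: (hd i j); rewrite -E -E'.
- move=> a b [->|[i [-> ->]]]; first by left.
  by right; exists i.+1.
Qed.

End Gen.
Section Gen2.
Variable A : finType.

Lemma chain (r : A -> A -> Prop) m (g : op A m) :
  quasiorder r -> (forall i a, preserves2 (translation g i a) r) ->
  forall u w, (forall j, r (u j) (w j)) -> r (g u) (g w).
Proof.
move=> [rr rt] hg u w huw.
pose z k := fun j : 'I_m.+1 => if (j < k)%N then w j else u j.
have Hk : forall k, r (g u) (g (z k)).
  elim=> [|k IH].
    have -> : z 0 = u by apply: functional_extensionality => j.
    exact: rr.
  have [lt|ge] := ltnP k m.+1.
    pose i := Ordinal lt.
    have E1 : g (z k) = translation g i (z k) (u i).
      rewrite /translation; congr g; apply: functional_extensionality => j.
      case: eqP => [->|//]; by rewrite /z /= ltnn.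
    have E2 : g (z k.+1) = translation g i (z k) (w i).
      rewrite /translation; congr g; apply: functional_extensionality => j.
      case: eqP => [->|ne]; first by rewrite /z /= ltnSn.
      rewrite /z ltnS leq_eqVlt.
      have -> : (nat_of_ord j == k) = false.
        by apply/eqP => E; apply: ne; apply: val_inj.
      by [].
    apply: rt IH _; rewrite E1 E2; exact: hg.
  have -> : z k.+1 = z k.
    apply: functional_extensionality => j; rewrite /z.
    have h1 : (j < k)%N by apply: leq_trans (ltn_ord j) ge.
    by rewrite ltnS (ltnW h1) h1.
  exact: IH.
have -> : w = z m.+1.
  by apply: functional_extensionality => j; rewrite /z ltn_ord.
exact: Hk.
Qed.

Variable f : A -> A.
Hypothesis KEY : forall h, End_Quord (Mf f) h -> Mf f h.

Lemma Nstar_clone : clone (Nstar (Mf f)).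
Proof.
split.
  move=> n i j a; rewrite /translation.
  case E: (i == j).
    by left; exists 0; apply: functional_extensionality => x /=.
  by right; exists (a i); apply: functional_extensionality => x /=.
move=> m n g hs Hg Hhs i a; apply: KEY => r [rq rp] x y rxy.
rewrite /translation /=; apply: (@chain r m g rq).
  move=> i' a'; exact: rp (Hg i' a').
move=> j; exact: (rp _ (Hhs j i a)).
Qed.

End Gen2.
Section Keys.
Variable A : finType.
Variable f : A -> A.

Lemma use_weak h z u : End_Quord (Mf f) h -> Rweak f z u (h z) (h u).
Proof. by move=> Hh; apply: (Hh _ (Rweak_q f z u)); right; split; exists 0. Qed.

Lemma use_pair h x y : f x = f y -> End_Quord (Mf f) h ->
  h x = h y \/ (h x = x /\ h y = y).
Proof. by move=> e Hh; apply: (Hh _ (Rpair_q e)); right. Qed.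

Lemma use_R2 h x y : f x <> f y -> y <> f x -> x <> f y ->
  R2 f x y (f (f x)) (f (f y)) -> End_Quord (Mf f) h -> R2 f x y (h x) (h y).
Proof. by move=> h1 h2 h3 h4 Hh; apply: (Hh _ (R2_q h1 h2 h3 h4)); right; left. Qed.

Lemma use_orb h x y : (forall i j, iter i f y <> iter j f x) -> End_Quord (Mf f) h ->
  Rorb f x y (h x) (h y).
Proof. by move=> hd Hh; apply: (Hh _ (Rorb_q hd)); right; exists 0. Qed.

Lemma nonconst_or (h : A -> A) : (exists u v, h u <> h v) \/ Mf f h.
Proof.
case: (classic (exists u v, h u <> h v)) => [|H]; first by left.
right; case: (pickP (fun _ : A => true)) => [a _|none].
  right; exists (h a); apply: functional_extensionality => x.
  by apply: NNPP => ne; apply: H; exists x, a.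
left; exists 0; apply: functional_extensionality => x.
by have := none x.
Qed.

Lemma step1 h : End_Quord (Mf f) h -> (exists u v, h u <> h v) ->
  forall z, exists i, h z = iter i f z.
Proof.
move=> Hh [u [v ne]] z.
case: (eqVneq (h z) (h u)) => [e|ne'].
  case: (use_weak z v Hh) => [e'|[[i ->] _]]; last by exists i.
  by case: ne; rewrite -e e'.
case: (use_weak z u Hh) => [e'|[[i ->] _]]; last by exists i.
by rewrite e' eqxx in ne'.
Qed.

Lemma iter_idem : typeI f -> forall i z, iter i.+1 f z = f z.
Proof. by move=> H; elim=> // i IH z; rewrite iterS IH H. Qed.

Lemma keyI : typeI f -> forall h, End_Quord (Mf f) h -> Mf f h.
Proof.
move=> HI h Hh.
case: (nonconst_or h) => [nc|//].
have S1 : forall z, h z = z \/ h z = f z.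
  move=> z; case: (step1 Hh nc z) => [[|i] ->]; first by left.
  by right; rewrite iter_idem.
case: (classic (forall a, h a = f a)) => [Hf|Hf].
  by left; exists 1; apply: functional_extensionality.
case: (classic (forall c, h c = c)) => [Hi|Hi].
  by left; exists 0; apply: functional_extensionality.
exfalso.
have [a ha] : exists a, h a <> f a by apply: NNPP => H; apply: Hf => a; apply: NNPP => ?; apply: H; exists a.
have [c hc] : exists c, h c <> c by apply: NNPP => H; apply: Hi => c; apply: NNPP => ?; apply: H; exists c.
have ea : h a = a by case: (S1 a) => E //; case: ha.
have ec : h c = f c by case: (S1 c) => E //; case: hc.
have afa : a <> f a by move=> E; apply: ha; rewrite ea.
have cfc : f c <> c by move=> E; apply: hc; rewrite ec.
case: (eqVneq (f a) (f c)) => [e|ne].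
  case: (use_pair e Hh); last by case.
  rewrite ea ec => E; apply: afa; by rewrite {2}E HI -e E.
have ne' : f a <> f c by apply/eqP.
have h2 : c <> f a by move=> E; apply: ne'; rewrite E HI.
have h3 : a <> f c by move=> E; apply: ne'; rewrite E HI.
have h4 : R2 f a c (f (f a)) (f (f c)) by right; right; rewrite !HI.
case: (use_R2 ne' h2 h3 h4 Hh); rewrite ea ec.
  by move=> E; apply: h3.
case; case=> E1 E2; [by apply: cfc | by apply: afa].
Qed.

End Keys.
Section KeyII.
Variable A : finType.
Variable f : A -> A.
Variable v : A.
Hypothesis Hv : forall x, f (f x) = v.
Hypothesis Hc : 3 <= #|[set x | f x == v]|.

Lemma fv : f v = v.
Proof. have e := Hv (f v); by rewrite (Hv v) in e. Qed.

Lemma iterII i z : iter i.+2 f z = v.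
Proof. by elim: i => [|i IH] /=; [rewrite Hv | rewrite -/(iter i.+2 f z) IH fv]. Qed.

Lemma third a b : exists w, [/\ f w = v, w <> a & w <> b].
Proof.
apply: NNPP => H.
have sub : [set x | f x == v] \subset [set a; b].
  apply/subsetP => w; rewrite !inE => /eqP fw.
  case: (eqVneq w a) => [_|na]; first by [].
  case: (eqVneq w b) => [_|nb]; first by [].
  by exfalso; apply: H; exists w; split => //; apply/eqP.
have := subset_leq_card sub; rewrite cards2.
by case: (a != b) => /= le; have := leq_trans Hc le.
Qed.

Lemma keyII : forall h, End_Quord (Mf f) h -> Mf f h.
Proof.
move=> h Hh.
case: (nonconst_or f h) => [nc|//].
have S1 : forall z, [\/ h z = z, h z = f z | h z = v].
  move=> z; case: (step1 Hh nc z) => [[|[|i]] ->]; [by constructor 1|by constructor 2|].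
  by constructor 3; rewrite iterII.
have notv : forall z, f z <> v -> z <> v by move=> z fz E; apply: fz; rewrite E fv.
have fnf : forall z, f z <> v -> f (f z) <> f z by move=> z fz; rewrite Hv => E; apply: fz.
case: (classic (forall x, f x = v -> h x = x)) => [HK|HK].
  left; exists 0; apply: functional_extensionality => z /=.
  case: (eqVneq (f z) v) => [/HK //|/eqP fz].
  have [w [fw wv wfz]] := third v (f z).
  have h1 : f z <> f w by rewrite fw.
  have h3 : z <> f w by rewrite fw; exact: notv.
  have h4 : R2 f z w (f (f z)) (f (f w)) by left; rewrite !Hv.
  case: (use_R2 h1 wfz h3 h4 Hh) => [|[]]; rewrite (HK w fw).
  - move=> E; case: (S1 z) => // E'.
      by case: wfz; rewrite -E.
    by case: wv; rewrite -E.
  - by case=> E _.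
  - by case=> _ E; case: wv; rewrite E.
have [x0 [fx0 hx0]] : exists x0, f x0 = v /\ h x0 <> x0.
  apply: NNPP => H; apply: HK => x fx; apply: NNPP => hx; apply: H; by exists x.
have hx0v : h x0 = v by case: (S1 x0) => // E; rewrite E fx0.
have HKv : forall y, f y = v -> h y = v.
  move=> y fy; have e : f x0 = f y by rewrite fx0 fy.
  by case: (use_pair e Hh) => [<-|[]].
have Sa : forall z, f z <> v -> h z <> z.
  move=> z fz hz.
  have [w [fw wv wfz]] := third v (f z).
  have h1 : f z <> f w by rewrite fw.
  have h3 : z <> f w by rewrite fw; exact: notv.
  have h4 : R2 f z w (f (f z)) (f (f w)) by left; rewrite !Hv.
  case: (use_R2 h1 wfz h3 h4 Hh) => [|[]]; rewrite hz (HKv w fw).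
  - exact: notv.
  - by case=> _ E; apply: wv.
  - by case=> E _; apply: (fnf z fz); rewrite -E.
have [y hy] : exists y, h y <> v.
  case: nc => u1 [u2 ne]; case: (eqVneq (h u1) v) => [e|/eqP n1]; last by exists u1.
  by exists u2 => E; apply: ne; rewrite e E.
have fy : f y <> v by move=> E; apply: hy; apply: HKv.
have hyf : h y = f y by case: (S1 y) => E //; try by [case: (Sa y fy) | case: hy].
left; exists 1; apply: functional_extensionality => z /=.
case: (eqVneq (f z) v) => [fz|/eqP fz]; first by rewrite HKv.
case: (S1 z) => E //; first by case: (Sa z fz).
exfalso.
case: (eqVneq (f y) (f z)) => [e|/eqP ne].
  case: (use_pair e Hh) => [|[E' _]]; first by rewrite E hyf.
  by apply: (Sa y fy).
have h1 : f z <> f y by move=> e; apply: ne.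
have h2 : y <> f z by move=> e; apply: fy; rewrite e Hv.
have h3 : z <> f y by move=> e; apply: fz; rewrite e Hv.
have h4 : R2 f z y (f (f z)) (f (f y)) by left; rewrite !Hv.
case: (use_R2 h1 h2 h3 h4 Hh) => [|[]]; rewrite E hyf.
- by move=> e; apply: fy.
- by case=> e _; apply: (notv z fz).
- by case=> e _; apply: fz; rewrite -e.
Qed.

End KeyII.
Section KeyIII.
Variable A : finType.
Variable f : A -> A.
Variable p : nat.
Hypothesis pr : prime p.
Hypothesis Hit : forall x, iter p f x = x.
Hypothesis injf : injective f.

Lemma iter_mulp q z : iter (q * p) f z = z.
Proof. by elim: q => // q IH; rewrite mulSn iterD IH Hit. Qed.

Lemma iter_mod n z : iter n f z = iter (n %% p) f z.
Proof. by rewrite {1}(divn_eq n p) iterD iter_mulp. Qed.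

Lemma disj a b : ~~ fconnect f a b -> forall i j, iter i f b <> iter j f a.
Proof.
move=> nc i j E; move/negP: nc; apply.
have -> : b = iter (i * p.-1 + j) f a.
  rewrite iterD -E -iterD -mulnSr prednK ?prime_gt0 //.
  by rewrite iter_mulp.
exact: fconnect_iter.
Qed.

Lemma eq_iter x i k : order f x = p -> iter i f x = iter k f x ->
  forall z, iter i f z = iter k f z.
Proof.
move=> ox E z; rewrite (iter_mod i) (iter_mod k).
have lt : forall n, n %% p < order f x by move=> n; rewrite ox ltn_mod prime_gt0.
rewrite (iter_mod i x) (iter_mod k x) in E.
have : findex f x (iter (i %% p) f x) = findex f x (iter (k %% p) f x) by rewrite E.
by rewrite !findex_iter // => ->.
Qed.

Lemma keyIII x0 y0 : order f x0 = p -> order f y0 = p -> ~~ fconnect f x0 y0 ->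
  forall h, End_Quord (Mf f) h -> Mf f h.
Proof.
move=> ox oy nxy h Hh.
case: (nonconst_or f h) => [nc|//].
have S1 := step1 Hh nc.
have S2 : forall a b, ~~ fconnect f a b -> exists i, h a = iter i f a /\ h b = iter i f b.
  move=> a b nab; case: (use_orb (disj nab) Hh) => [E|//].
  have [m hm] := S1 a; have [n hn] := S1 b.
  by case: (@disj a b nab n m); rewrite -hm -hn E.
have [k [hx hy]] := S2 _ _ nxy.
left; exists k; apply: functional_extensionality => z.
case: (boolP (fconnect f x0 z)) => cz.
  have nyz : ~~ fconnect f y0 z.
    apply/negP => cyz; move/negP: nxy; apply.
    apply: connect_trans cz _; by rewrite fconnect_sym.
  have [i [hy' hz]] := S2 _ _ nyz.
  by rewrite hz; apply: (eq_iter oy); rewrite -hy' hy.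
have [i [hx' hz]] := S2 _ _ cz.
by rewrite hz; apply: (eq_iter ox); rewrite -hx' hx.
Qed.

End KeyIII.
Section Main.
Variable A : finType.
Variable f : A -> A.

Lemma Mf_submonoid : submonoid (Mf f).
Proof.
split; first by left; exists 0.
move=> g h Hg Hh; case: Hg => [[a Ea]|[c Ec]]; case: Hh => [[b Eb]|[d Ed]]; subst.
- left; exists (a + b); apply: functional_extensionality => x; by rewrite iterD.
- by right; exists (iter a f d).
- by right; exists c.
- by right; exists c.
Qed.

Lemma T_Mf : subsetM (@Tset A) (Mf f).
Proof. by move=> g [->|C]; [left; exists 0 | right]. Qed.

Lemma T_ucl (N : mapset A) : subsetM (@Tset A) (uclosure N).
Proof.
move=> g [->|[c ->]] N' [sub _] _ cl //.
have := (proj1 cl) 1 ord0 ord_max (fun _ => c).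
have -> : translation (fun x : 'I_2 -> A => x ord0) ord_max (fun _ => c) = (fun _ => c).
  by apply: functional_extensionality => x.
by [].
Qed.

Lemma iter_in (N : mapset A) g : submonoid N -> N g -> forall l, N (iter l g).
Proof.
move=> [N1 NM] Ng; elim=> [|l IH]; first exact: N1.
exact: (NM _ _ Ng IH).
Qed.

Hypothesis KEY : forall h, End_Quord (Mf f) h -> Mf f h.
Hypothesis GEN : forall k, ~ Tset (iter k f) -> exists l, forall x, iter l (iter k f) x = f x.
Hypothesis nTf : ~ Tset f.

Lemma ucl_eq : eqM (uclosure (Mf f)) (Mf f).
Proof.
move=> g; split.
  by move=> H; apply: H; [exact: Mf_submonoid | by [] | exact: Nstar_clone].
by move=> Mg N _ sub _; apply: sub.
Qed.

Lemma End_eq : eqM (End_gQuord (Mf f)) (End_Quord (Mf f)).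
Proof.
move=> h; split.
  move=> H r [[rr rt] rp] x y rxy.
  pose rho := fun t : 'I_2 -> A => r (t ord0) (t ord_max).
  have G : gQuord (Mf f) rho.
    split; first split.
    - by move=> a; apply: rr.
    - move=> X rows cols; apply: rt (rows ord0) (cols ord_max).
    - by move=> g Mg t; apply: rp.
  have := H 2 rho G (fun i => if i == ord0 then x else y).
  by apply.
move=> Hh m rho [_ pr]; exact: pr _ (KEY Hh).
Qed.

Lemma minimal : minimal_uclosed (Mf f).
Proof.
split.
- exact: Mf_submonoid.
- exact: ucl_eq.
- split; first exact: T_Mf.
  by exists f; split => //; left; exists 1.
move=> N subN ucN [sNM [g0 [Mg0 nNg0]]].
have TN : subsetM (@Tset A) N by move=> g Tg; apply/ucN; apply: T_ucl.
move=> g; split; last exact: TN.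
move=> Ng; case: (sNM g Ng) => [[k Ek]|C]; last by right.
case: (classic (Tset g)) => // nT; exfalso.
have nTk : ~ Tset (iter k f) by rewrite -Ek.
have [l Hl] := GEN nTk.
have Nf : N f.
  have -> : f = iter l g by apply: functional_extensionality => x; rewrite Ek Hl.
  exact: iter_in.
case: Mg0 => [[j Ej]|C]; apply: nNg0.
  rewrite Ej; exact: iter_in.
by apply: TN; right.
Qed.

End Main.
Lemma genIII (A : finType) (f : A -> A) p : prime p -> (forall x, iter p f x = x) ->
  forall k, ~ Tset (iter k f) -> exists l, forall x, iter l (iter k f) x = f x.
Proof.
move=> pr Hit k nT.
have Hm : forall n z, iter n f z = iter (n %% p) f z by move=> n z; apply: iter_mod.
case: (posnP (k %% p)) => [k0|kp].
  case: nT; left; apply: functional_extensionality => x; by rewrite Hm k0.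
case: (egcdnP p kp) => km kn E _.
have cop : gcdn (k %% p) p = 1.
  apply/eqP; change (coprime (k %% p) p).
  by rewrite coprime_modl coprime_sym prime_coprime // /dvdn -lt0n.
exists km => x; rewrite -iterM Hm -modnMmr E cop modnMDl modn_small ?prime_gt1 //.
Qed.

Theorem proposition5p2 (A : finType) (f : A -> A) :
  ~ Tset f -> typeI f \/ typeII f \/ typeIII f ->
  [/\ minimal_uclosed (Mf f),
      eqM (uclosure (Mf f)) (Mf f) &
      eqM (End_gQuord (Mf f)) (End_Quord (Mf f))].
Proof.
move=> nTf Ht.
have [KEY GEN] : (forall h, End_Quord (Mf f) h -> Mf f h) /\
   (forall k, ~ Tset (iter k f) -> exists l, forall x, iter l (iter k f) x = f x).
  case: Ht => [HI|[[v [Hv Hc]]|[bij [p [pr Hit [x [y [ox oy nc]]]]]]]].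
  - split; first exact: keyI.
    move=> [|k] nT; first by case: nT; left.
    by exists 1 => x; change (iter k.+1 f x = f x); rewrite iter_idem.
  - split; first exact: (keyII Hv Hc).
    move=> [|[|k]] nT; first by case: nT; left.
      by exists 1.
    case: nT; right; exists v; apply: functional_extensionality => x.
    exact: (iterII Hv).
  - split; first exact: (keyIII pr Hit (bij_inj bij) ox oy nc).
    exact: (genIII pr Hit).
split.
- exact: minimal.
- exact: ucl_eq.
- exact: End_eq.
Qed.
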